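(* For the toy interacting scalar field, the interacting SDR is $i_{\mathrm{int}}=$ inclusion of constants $\mathbb C[[\hbar]]\to\mathbb C[[x,\xi]][[\hbar]]$, $p_{\mathrm{int}}(O)=\langle e^{\frac{\mathrm{i}}{\hbar}P}O\rangle/\langle e^{\frac{\mathrm{i}}{\hbar}P}\rangle$ (perturbative expectation value of $O(x)$ w.r.t. $S$), $K_{\mathrm{int}}(\xi f(x))=0$, and its classical limit is $$K^{\mathrm{cl}}_{\mathrm{int}}(O)=\xi\,\frac{O(x)-O(0)}{S'(x)}=\xi\,\frac{O(x)-O(0)}{x+P'(x)}\qquad (O=O(x)\in\mathbb C[[x]]),$$ the quotient being understood as a formal power series.
   Context: Toy scalar field: $\mathcal F=\mathbb R\oplus\mathbb R[-1]$ with even coordinate $x$ (degree $0$) and odd coordinate $\xi$ (degree $-1$), $\omega=\delta x\wedge\delta\xi$, $\Delta=\partial_x\partial_\xi$, $\mathcal F'=0$, differential $d$ such that $S_0=\frac{x^2}{2}$, chain contraction $\kappa$ with $\hat\kappa=\xi\partial_x$. Action $S(x)=\frac{x^2}{2}+P(x)$ with $P(x)=\sum_{n\ge3}\frac{P_n}{n!}x^n$ a polynomial; $S'$ denotes the derivative in $x$. BV differential $Q_\hbar=S'(x)\partial_\xi-\mathrm{i}\hbar\partial_x\partial_\xi$ on $\mathbb C[[x,\xi]][[\hbar]]$. Free classical SDR: $i$ = inclusion of constants, $p$ = constant term, $K=\nu\hat\kappa$ (so $K(x^N)=x^{N-1}\xi$ for $N\ge1$, $K(1)=0$, $K(\xi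 f)=0$). $(i_{\mathrm{int}},p_{\mathrm{int}},K_{\mathrm{int}})$ is obtained by the homological perturbation lemma from $(i,p,K)$ with perturbation $\delta=P'(x)\partial_\xi-\mathrm{i}\hbar\partial_x\partial_\xi$, i.e. $K_{\mathrm{int}}=\sum_kK(-\delta K)^k$ etc. The Gaussian average $\langle F\rangle=(e^{\frac{\mathrm{i}\hbar}{2}\partial_x^2}F)|_{x=0}$. $K^{\mathrm{cl}}_{\mathrm{int}}$ denotes $K_{\mathrm{int}}$ modulo $\hbar$. *)

(* Defs.v *)
From HB Require Import structures.
From mathcomp Require Import all_boot all_order all_algebra all_field.
Set Implicit Arguments. Unset Strict Implicit. Unset Printing Implicit Defensive.
Import Order.TTheory GRing.Theory Num.Theory.
Local Open Scope ring_scope.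

Notation C := algC.

Definition ser := nat -> C.
(* Elements of C[[x]][[hbar]]: bs a b = coefficient of hbar^a x^b. *)
Definition bser := nat -> nat -> C.
(* Elements of C[[x,xi]][[hbar]] (xi odd, xi^2 = 0): a pair (f, g)
   representing  f(x,hbar) + xi g(x,hbar). *)
Definition sfield := (bser * bser)%type.

Definition sf_zero : sfield := (fun _ _ => 0, fun _ _ => 0).
Definition sf_opp (v : sfield) : sfield := (fun a b => - v.1 a b, fun a b => - v.2 a b).

Definition sf_converges (t : nat -> sfield) (L : sfield) : Prop :=
  forall a b,
    (exists N0, forall N, (N0 <= N)%N -> \sum_(k < N) (t k).1 a b = L.1 a b) /\
    (exists N0, forall N, (N0 <= N)%N -> \sum_(k < N) (t k).2 a b = L.2 a b).

Definition ser_converges (t : nat -> ser) (L : ser) : Prop :=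
  forall a, exists N0, forall N, (N0 <= N)%N -> \sum_(k < N) t k a = L a.

Definition smul (s t : ser) : ser := fun n => \sum_(j < n.+1) s j * t (n - j)%N.

Fixpoint sinv_upto (s : ser) (n : nat) : seq C :=
  match n with
  | 0 => [:: (s 0%N)^-1]
  | n'.+1 => let l := sinv_upto s n' in
             rcons l (- (s 0%N)^-1 * \sum_(j < n'.+1) s j.+1 * nth 0 l (n' - j)%N)
  end.
(* multiplicative inverse of s (when s 0 != 0) *)
Definition sinv (s : ser) : ser := fun n => nth 0 (sinv_upto s n) n.
Definition sdiv (s t : ser) : ser := smul s (sinv t).

Definition Spoly (P : {poly C}) : {poly C} := (2%:R)^-1 *: 'X^2 + P.
Definition Sprime (P : {poly C}) : {poly C} := (Spoly P)^`().

(* K(x^N) = x^(N-1) xi, K(1) = 0, K(xi f) = 0 *)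
Definition Kop (v : sfield) : sfield := (fun _ _ => 0, fun a b => v.1 a b.+1).
Definition incl (c : ser) : sfield :=
  (fun a b => if b is 0%N then c a else 0, fun _ _ => 0).
Definition proj (v : sfield) : ser := fun a => v.1 a 0%N.

(* Perturbation delta = P'(x) d_xi - i hbar d_x d_xi. *)
Definition deltaop (P : {poly C}) (v : sfield) : sfield :=
  (fun a b => \sum_(j < b.+1) (P^`())`_j * v.2 a (b - j)%N
              - (if a is a'.+1 then 'i * (b.+1)%:R * v.2 a' b.+1 else 0),
   fun _ _ => 0).

(* Homological perturbation lemma: the k-th terms of
   i_int = sum_k (-K delta)^k i,  p_int = sum_k p (-delta K)^k,
   K_int = sum_k K (-delta K)^k. *)
Definition iint_term (P : {poly C}) (c : ser) (k : nat) : sfield :=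
  iter k (fun w => sf_opp (Kop (deltaop P w))) (incl c).
Definition pint_term (P : {poly C}) (v : sfield) (k : nat) : ser :=
  proj (iter k (fun w => sf_opp (deltaop P (Kop w))) v).
Definition Kint_term (P : {poly C}) (v : sfield) (k : nat) : sfield :=
  Kop (iter k (fun w => sf_opp (deltaop P (Kop w))) v).

(* Perturbative expectation value  < e^{(i/hbar) P} O >  with
   < F > = (e^{(i hbar/2) d_x^2} F)|_{x=0}.
   Expanding e^{(i/hbar)P} O = sum_{a,m} (i^m/m!) hbar^(a-m) P^m O_a(x) and
   e^{(i hbar/2) d_x^2} = sum_k ((i/2)^k/k!) hbar^k d_x^(2k), the term
   (a, m, k) contributes to hbar^(a-m+k). *)
Definition dx (F : ser) : ser := fun b => (b.+1)%:R * F b.+1.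
Definition gterm (P : {poly C}) (O : bser) (a m k : nat) : C :=
  ('i ^+ m / (m`!)%:R) * (('i / 2%:R) ^+ k / (k`!)%:R) *
  iter (2 * k) dx (fun b => \sum_(j < b.+1) (P ^+ m)`_j * O a (b - j)%N) 0%N.
(* Since P has order >= 3, x^(2k) can only be hit
   when 2k >= 3m, so the only nonzero terms have k = n - a + m with
   a <= n and m <= 2(n - a) (and all negative hbar-powers vanish). *)
Definition expectP (P : {poly C}) (O : bser) : ser :=
  fun n => \sum_(a < n.+1) \sum_(m < (2 * (n - a)).+1) gterm P O a m (n - a + m)%N.

Definition one_obs : bser := fun a b => if (a == 0%N) && (b == 0%N) then 1 else 0.

Definition embed (O : ser) : sfield :=
  (fun a b => if a is 0%N then O b else 0, fun _ _ => 0).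

(* (O(x) - O(0)) / S'(x) as a formal power series:
   ((O(x)-O(0))/x) * (S'(x)/x)^{-1}; S'(x)/x has constant term 1. *)
Definition Kcl_coef (P : {poly C}) (O : ser) : ser :=
  sdiv (fun b => O b.+1) (fun b => (Sprime P)`_b.+1).

(* Main.v *)
Require Import Defs.
From HB Require Import structures.
From mathcomp Require Import all_boot all_order all_algebra all_field.
From mathcomp Require Import ring zify.
From Stdlib Require Import FunctionalExtensionality.
Import Order.TTheory GRing.Theory Num.Theory.
Local Open Scope ring_scope.

Ltac fext := apply: functional_extensionality => x.

Definition mulps (p : {poly algC}) (f : ser) : ser :=
  fun b => \sum_(j < b.+1) p`_j * f (b - j)%N.
Definition xs (f : ser) : ser := fun b => if b is b'.+1 then f b' else 0.
Definition sadd (f g : ser) : ser := fun b => f b + g b.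
Definition sscale (c : algC) (f : ser) : ser := fun b => c * f b.
Definition szero : ser := fun _ => 0.


Lemma mulpsD p q f : mulps (p + q) f = sadd (mulps p f) (mulps q f).
Proof. fext; rewrite /mulps /sadd -big_split /=; apply: eq_bigr => j _; by rewrite coefD mulrDl. Qed.

Lemma mulps0 f : mulps 0 f = szero.
Proof. fext; rewrite /mulps /szero big1 // => j _; by rewrite coef0 mul0r. Qed.

Lemma mulpsC c f : mulps c%:P f = sscale c f.
Proof. fext; rewrite /mulps /sscale big_ord_recl /= coefC /= subn0 big1 ?addr0 // => j _.
by rewrite coefC /= mul0r. Qed.

Lemma mulpsMX p f : mulps (p * 'X) f = xs (mulps p f).
Proof. fext => /=; rewrite /mulps /xs; case: x => [|b].
  by rewrite big_ord1 coefMX /= mul0r.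
rewrite big_ord_recl coefMX /= mul0r add0r; apply: eq_bigr => j _.
by rewrite coefMX /= subSS. Qed.

Lemma mulps_xs p f : mulps p (xs f) = xs (mulps p f).
Proof. fext; rewrite /mulps /xs; case: x => [|b].
  by rewrite big_ord1 /= mulr0.
rewrite big_ord_recr /= subnn mulr0 addr0; apply: eq_bigr => j _.
by rewrite subSn // -ltnS. Qed.

Lemma mulpsZ c p f : mulps (c *: p) f = sscale c (mulps p f).
Proof. fext; rewrite /mulps /sscale mulr_sumr; apply: eq_bigr => j _; by rewrite coefZ mulrA. Qed.

Lemma mulps_sadd p f g : mulps p (sadd f g) = sadd (mulps p f) (mulps p g).
Proof. fext; rewrite /mulps /sadd -big_split; apply: eq_bigr => j _; by rewrite mulrDr. Qed.

Lemma mulps_sscale p c f : mulps p (sscale c f) = sscale c (mulps p f).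
Proof. fext; rewrite /mulps /sscale mulr_sumr; apply: eq_bigr => j _; by rewrite mulrCA. Qed.

Lemma mulps_szero p : mulps p szero = szero.
Proof. fext; rewrite /mulps /szero big1 // => j _; by rewrite mulr0. Qed.

Lemma mulpsM p q f : mulps (p * q) f = mulps p (mulps q f).
Proof.
elim/poly_ind: p => [|p c IH]; first by rewrite mul0r !mulps0.
rewrite mulrDl -mulrA (mulrC 'X) mulrA mul_polyC mulpsD mulpsMX IH mulpsZ.
by rewrite mulpsD mulpsMX mulpsC.
Qed.

Lemma mulpsMn p n f : mulps (p *+ n) f = sscale n%:R (mulps p f).
Proof. by rewrite -scaler_nat mulpsZ. Qed.

Lemma dx_sadd f g : dx (sadd f g) = sadd (dx f) (dx g).
Proof. fext; by rewrite /dx /sadd mulrDr. Qed.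
Lemma dx_sscale c f : dx (sscale c f) = sscale c (dx f).
Proof. fext; by rewrite /dx /sscale mulrCA. Qed.
Lemma dx_szero : dx szero = szero.
Proof. fext; by rewrite /dx /szero mulr0. Qed.
Lemma iter_dx_sadd n f g : iter n dx (sadd f g) = sadd (iter n dx f) (iter n dx g).
Proof. elim: n => [//|n IH] /=; by rewrite IH dx_sadd. Qed.
Lemma iter_dx_sscale n c f : iter n dx (sscale c f) = sscale c (iter n dx f).
Proof. elim: n => [//|n IH] /=; by rewrite IH dx_sscale. Qed.
Lemma iter_dx_szero n : iter n dx szero = szero.
Proof. elim: n => [//|n IH] /=; by rewrite IH dx_szero. Qed.

Lemma dx_xs f : dx (xs f) = sadd f (xs (dx f)).
Proof. fext; rewrite /dx /sadd /xs; case: x => [|b]; first by rewrite mul1r addr0.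
rewrite [(b.+2)%:R]mulrS mulrDl mul1r //. Qed.

Lemma iter_dx_xs n g : iter n.+1 dx (xs g) =
  sadd (xs (iter n.+1 dx g)) (sscale n.+1%:R (iter n dx g)).
Proof.
elim: n => [|n IH].
  rewrite /= dx_xs; fext; by rewrite /sadd /sscale mul1r addrC.
rewrite iterS IH dx_sadd dx_xs dx_sscale.
fext; rewrite /sadd /sscale /= [(n.+2)%:R]mulrS; ring.
Qed.

Definition Gk (k : nat) (h : ser) : algC :=
  (('i / 2%:R) ^+ k / (k`!)%:R) * iter (2 * k) dx h 0%N.

Lemma Gk_sadd k f g : Gk k (sadd f g) = Gk k f + Gk k g.
Proof. by rewrite /Gk iter_dx_sadd /sadd mulrDr. Qed.
Lemma Gk_sscale k c f : Gk k (sscale c f) = c * Gk k f.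
Proof. by rewrite /Gk iter_dx_sscale /sscale mulrCA. Qed.
Lemma Gk_szero k : Gk k szero = 0.
Proof. by rewrite /Gk iter_dx_szero /szero mulr0. Qed.

Lemma fact_neq0 k : (k`!)%:R != 0 :> algC.
Proof. by rewrite pnatr_eq0 -lt0n fact_gt0. Qed.

Lemma Gk_xs k h : Gk k.+1 (xs h) = 'i * Gk k (dx h).
Proof.
rewrite /Gk.
have -> : (2 * k.+1 = (2 * k).+2)%N by rewrite mulnS add2n.
rewrite iter_dx_xs /sadd /sscale /= add0r -iterSr.
have -> : ((2 * k).+2 = 2 * k.+1)%N by rewrite mulnS add2n.
rewrite factS !natrM.
have h1 := fact_neq0 k.
have h2 : (k.+1)%:R != 0 :> algC by rewrite pnatr_eq0.
have h3 : 2%:R != 0 :> algC by rewrite pnatr_eq0.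
rewrite exprS -?iterS. field. by rewrite h1 addrC natr1 h2.
Qed.

Lemma xs_sadd f g : xs (sadd f g) = sadd (xs f) (xs g).
Proof. fext; rewrite /xs /sadd; case: x => //; by rewrite addr0. Qed.

Lemma dx_mulps p f : dx (mulps p f) = sadd (mulps p^`() f) (mulps p (dx f)).
Proof.
elim/poly_ind: p => [|p c IH].
  rewrite deriv0 !mulps0 dx_szero; fext; by rewrite /sadd /szero addr0.
rewrite derivMXaddC !mulpsD !mulpsMX !mulpsC dx_sadd dx_xs IH dx_sscale.
rewrite xs_sadd.
fext; rewrite /sadd /sscale; ring.
Qed.

Definition cm (m : nat) : algC := 'i ^+ m / (m`!)%:R.
Definition PT (P : {poly algC}) (r m : nat) (f : ser) : algC :=
  cm m * Gk (r + m) (mulps (P ^+ m) f).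
Definition Phi P (r : nat) f := \sum_(m < (2 * r).+1) PT P r m f.

Lemma coef_Pexp (P : {poly algC}) (hP : forall n : nat, (n < 3)%N -> P`_n = 0) m j :
  (j < 3 * m)%N -> (P ^+ m)`_j = 0.
Proof.
elim: m j => [|m IH] j hj; first by rewrite muln0 in hj.
rewrite exprS coefM big1 // => i _.
case: (ltnP i 3) => hi; first by rewrite hP // mul0r.
rewrite IH ?mulr0 //.
rewrite mulnS in hj; have := ltn_ord i; lia.
Qed.

Lemma iter_dx_low (h : ser) N : (forall j, (j < N)%N -> h j = 0) ->
  forall n j, (j + n < N)%N -> iter n dx h j = 0.
Proof.
move=> H n; elim: n => [|n IH] j hj /=; first by rewrite H // -(addn0 j).
by rewrite /dx IH ?mulr0 // addSn -addnS.
Qed.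

Lemma Gk_low k h : (forall j, (j <= 2 * k)%N -> h j = 0) -> Gk k h = 0.
Proof.
move=> H; rewrite /Gk (@iter_dx_low h (2 * k).+1) ?mulr0 //.
Qed.

Lemma PT_vanish (P : {poly algC}) (hP : forall n : nat, (n < 3)%N -> P`_n = 0) r m f :
  (2 * r < m)%N -> PT P r m f = 0.
Proof.
move=> hm; rewrite /PT Gk_low ?mulr0 // => j hj.
rewrite /mulps big1 // => i _; rewrite coef_Pexp ?mul0r //.
have := ltn_ord i; lia.
Qed.

Lemma Phi_ext (P : {poly algC}) (hP : forall n : nat, (n < 3)%N -> P`_n = 0) r f M :
  (2 * r < M)%N -> \sum_(m < M) PT P r m f = Phi P r f.
Proof.
move=> hM; rewrite /Phi.
have [t ->] : exists t, M = ((2 * r).+1 + t)%N by exists (M - (2 * r).+1)%N; lia.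
elim: t => [|t IH]; first by rewrite addn0.
by rewrite addnS big_ord_recr /= IH PT_vanish ?addr0 //; lia.
Qed.

Lemma Phi_sadd P r f g : Phi P r (sadd f g) = Phi P r f + Phi P r g.
Proof. rewrite /Phi -big_split; apply: eq_bigr => m _; by rewrite /PT mulps_sadd Gk_sadd mulrDr. Qed.
Lemma Phi_sscale P r c f : Phi P r (sscale c f) = c * Phi P r f.
Proof. rewrite /Phi mulr_sumr; apply: eq_bigr => m _; by rewrite /PT mulps_sscale Gk_sscale mulrCA. Qed.
Lemma Phi_szero P r : Phi P r szero = 0.
Proof. rewrite /Phi big1 // => m _; by rewrite /PT mulps_szero Gk_szero mulr0. Qed.

Lemma Phi_low P r f : (forall j, (j <= 6 * r)%N -> f j = 0) -> Phi P r f = 0.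
Proof.
move=> H; rewrite /Phi big1 // => m _.
rewrite /PT Gk_low ?mulr0 // => j hj; rewrite /mulps big1 // => i _.
rewrite H ?mulr0 //. have := ltn_ord m; lia.
Qed.

Definition Sop P (f : ser) : ser := sadd (xs f) (mulps P^`() f).

Lemma cmS m : 'i * cm m.+1 * m.+1%:R = - cm m.
Proof.
rewrite /cm factS natrM exprS.
have h1 := fact_neq0 m.
have h2 : (m.+1)%:R != 0 :> algC by rewrite pnatr_eq0.
have hi : 'i * 'i = -1 :> algC by rewrite -expr2 sqrCi.
rewrite !mulrA hi mulN1r invfM !mulNr; congr (- _).
by rewrite -mulrA mulrAC mulVf // mul1r.
Qed.

Section Core.
Variable P : {poly algC}.
Hypothesis hP : forall n : nat, (n < 3)%N -> P`_n = 0.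
Variables (r : nat) (f : ser).
Let g := mulps P^`() f.
Let X m := 'i * cm m * m%:R * Gk (r + m) (mulps (P ^+ m.-1) g).
Let Y m := cm m * Gk (r.+1 + m) (mulps (P ^+ m) g).

Lemma term_split m : PT P r.+1 m (Sop P f) = 'i * PT P r m (dx f) + X m + Y m.
Proof.
rewrite /PT /Sop /X /Y /g mulps_sadd Gk_sadd mulps_xs addSn Gk_xs dx_mulps Gk_sadd.
rewrite deriv_exp [P^`() * _]mulrC mulpsMn mulpsM Gk_sscale.
rewrite -addSn; ring.
Qed.

Lemma X_shift m : X m.+1 = - Y m.
Proof. by rewrite /X /Y cmS addnS -addSn mulNr. Qed.

Lemma core : Phi P r.+1 (Sop P f) = 'i * Phi P r (dx f).
Proof.
rewrite -(@Phi_ext P hP r.+1 _ (2*r).+4); last lia.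
rewrite -(@Phi_ext P hP r (dx f) (2*r).+4); last lia.
under eq_bigr do rewrite term_split.
rewrite !big_split /= -mulr_sumr.
rewrite [\sum_(i < _) X i]big_ord_recl /=.
have -> : X 0%N = 0 by rewrite /X mulr0 mul0r.
rewrite add0r.
have hX : \sum_(i < (2*r).+3) X (bump 0 i) = - \sum_(i < (2*r).+3) Y i.
  rewrite -sumrN; apply: eq_bigr => i _; by rewrite /bump leq0n add1n X_shift.
rewrite hX [\sum_(i < (2*r).+4) Y i]big_ord_recr /=.
have -> : Y (2 * r).+3 = 0.
  by rewrite /Y -/(PT P r.+1 _ g) PT_vanish //; lia.
by rewrite addr0 addrNK.
Qed.
End Core.

Section E.
Variable P : {poly algC}.
Hypothesis hP : forall n : nat, (n < 3)%N -> P`_n = 0.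

Lemma Phi0_Sop f : Phi P 0 (Sop P f) = 0.
Proof.
rewrite /Phi big_ord1 /PT /Gk /= /mulps big_ord1 /Sop /sadd /xs /mulps big_ord1.
rewrite coef_deriv hP // mul0rn mul0r addr0 !mulr0 //.
Qed.

Lemma sum_Sop (t : bser) n :
  \sum_(a < n.+1) Phi P (n - a) (Sop P (t a)) =
  \sum_(a < n) 'i * Phi P (n.-1 - a) (dx (t a)).
Proof.
rewrite big_ord_recr /= subnn Phi0_Sop addr0; apply: eq_bigr => a _.
have -> : (n - a = (n.-1 - a).+1)%N by have := ltn_ord a; lia.
by rewrite core.
Qed.

Lemma expectP_Phi (u : bser) n :
  expectP P u n = \sum_(a < n.+1) Phi P (n - a) (u a).
Proof.
rewrite /expectP /Phi /=; apply eq_bigr => a _; apply eq_bigr => m _.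
by rewrite /gterm /PT /cm /Gk [RHS]mulrA.
Qed.

Definition Qop (t : bser) : bser := fun a b =>
  Sop P (t a) b - (if a is a'.+1 then 'i * dx (t a') b else 0).

Lemma expect_Q t n : expectP P (Qop t) n = 0.
Proof.
rewrite expectP_Phi big_ord_recl /=.
have -> : Qop t 0 = Sop P (t 0%N) by fext; rewrite /Qop subr0.
have hQ : forall i : 'I_n, Qop t (bump 0 i) = sadd (Sop P (t (bump 0 i))) (sscale (- 'i) (dx (t i))).
  move=> i; rewrite /bump leq0n add1n; fext; by rewrite /Qop /sadd /sscale mulNr.
under eq_bigr => i _ do rewrite hQ Phi_sadd Phi_sscale.
rewrite big_split /=.
have -> : \sum_(i < n) Phi P (n - bump 0 i) (Sop P (t (bump 0 i))) =
          \sum_(i < n) Phi P (n.-1 - i) (Sop P (t i.+1)).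
  apply: eq_bigr => i _; rewrite /bump leq0n add1n; congr (Phi P _ _); lia.
have -> : \sum_(i < n) (- 'i) * Phi P (n - bump 0 i) (dx (t i)) =
          - \sum_(i < n) 'i * Phi P (n.-1 - i) (dx (t i)).
  rewrite -sumrN; apply: eq_bigr => i _; rewrite /bump leq0n add1n mulNr; congr (- (_ * Phi P _ _)); lia.
clear hQ; case: n => [|n] /=.
  by rewrite !big_ord0 Phi0_Sop subrr addr0.
rewrite subn0 (core P hP); have /= -> := sum_Sop (fun a => t a.+1) n.
rewrite [\sum_(i < n.+1) _ * _]big_ord_recl /= subn0.
have -> : \sum_(i < n) 'i * Phi P (n - bump 0 i) (dx (t (bump 0 i))) =
          \sum_(i < n) 'i * Phi P (n.-1 - i) (dx (t i.+1)).
  apply: eq_bigr => i _; rewrite /bump leq0n add1n; congr (_ * Phi P _ _); lia.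
ring.
Qed.
End E.

Definition Tn (n : nat) (f : ser) : {poly algC} := \poly_(i < n.+1) f i.
Lemma Tn_coef n f j : (j <= n)%N -> (Tn n f)`_j = f j.
Proof. by move=> h; rewrite /Tn coef_poly ltnS h. Qed.

Lemma smul_poly (p q : {poly algC}) f g n :
  (forall j, (j <= n)%N -> p`_j = f j) -> (forall j, (j <= n)%N -> q`_j = g j) ->
  (p * q)`_n = smul f g n.
Proof.
move=> hp hq; rewrite coefM /smul; apply: eq_bigr => j _.
have := ltn_ord j; rewrite ltnS => hj.
by rewrite hp // hq // leq_subr.
Qed.

Lemma smul_comm f g : smul f g = smul g f.
Proof.
fext; rewrite -(@smul_poly (Tn x f) (Tn x g)); try by move=> j hj; rewrite Tn_coef.
by rewrite mulrC; apply: smul_poly => j hj; rewrite Tn_coef.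
Qed.

Lemma smul_assoc a b c : smul (smul a b) c = smul a (smul b c).
Proof.
fext.
rewrite -(@smul_poly (Tn x a * Tn x b) (Tn x c)); last by move=> j hj; rewrite Tn_coef.
  rewrite -mulrA; apply: smul_poly => j hj; first by rewrite Tn_coef.
  by apply: smul_poly => i hi; rewrite Tn_coef //; apply: leq_trans hj.
by move=> j hj; apply: smul_poly => i hi; rewrite Tn_coef //; apply: leq_trans hj.
Qed.

Definition sdelta : ser := fun n => if n is 0 then 1 else 0.

Lemma smul_delta f : smul f sdelta = f.
Proof.
fext; rewrite /smul big_ord_recr /= subnn mulr1 big1 ?add0r // => j _.
have := ltn_ord j; rewrite -subn_gt0; case: (x - j)%N => // k _; by rewrite mulr0.
Qed.

Lemma sinv_upto_size s n : size (sinv_upto s n) = n.+1.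
Proof. by elim: n => [//|n IH] /=; rewrite size_rcons IH. Qed.

Lemma sinv_upto_nth s n j : (j <= n)%N -> nth 0 (sinv_upto s n) j = sinv s j.
Proof.
elim: n => [|n IH] hj; first by move: hj; rewrite leqn0 => /eqP ->.
case: (ltngtP j n.+1) hj => // [hlt _|-> _]; last by [].
by rewrite /= nth_rcons sinv_upto_size hlt IH.
Qed.

Lemma sinvS s n : sinv s n.+1 =
  - (s 0%N)^-1 * \sum_(j < n.+1) s j.+1 * sinv s (n - j)%N.
Proof.
rewrite {1}/sinv /= nth_rcons sinv_upto_size ltnn eqxx; congr (_ * _).
by apply: eq_bigr => j _; rewrite sinv_upto_nth // leq_subr.
Qed.

Lemma smul_sinv s : s 0%N != 0 -> smul s (sinv s) = sdelta.
Proof.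
move=> h0; fext; case: x => [|n].
  by rewrite /smul big_ord1 /sinv /= mulfV.
rewrite /smul big_ord_recl /= subn0 sinvS.
under eq_bigr => j _ do rewrite /bump leq0n add1n subSS.
by rewrite mulrA mulrN mulfV // mulN1r addNr.
Qed.

Lemma smul_cancel c s : s 0%N != 0 -> smul (smul c s) (sinv s) = c.
Proof. by move=> h; rewrite smul_assoc smul_sinv // smul_delta. Qed.

Definition Fop P (w : sfield) : sfield := sf_opp (deltaop P (Kop w)).
Definition constb (c : ser) : bser := fun a b => if b is 0 then c a else 0.

Section F.
Variable P : {poly algC}.
Hypothesis hP : forall n : nat, (n < 3)%N -> P`_n = 0.

Lemma Fop1 w a b : (Fop P w).1 a b = - (\sum_(j < b.+1) (P^`())`_j * w.1 a (b - j).+1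
   - (if a is a'.+1 then 'i * (b.+1)%:R * w.1 a' b.+2 else 0)).
Proof. by []. Qed.

Lemma Pd_low j : (j < 2)%N -> (P^`())`_j = 0.
Proof. by move=> h; rewrite coef_deriv hP ?mul0rn. Qed.

Lemma weight v k a b : (3 * a + b < k)%N -> (iter k (Fop P) v).1 a b = 0.
Proof.
elim: k a b => [//|k IH] a b hk.
rewrite iterS Fop1 big1; last first.
  move=> j _; case: (ltnP j 2) => hj; first by rewrite Pd_low ?mul0r.
  rewrite IH ?mulr0 //; have := ltn_ord j; lia.
case: a hk => [|a] hk; first by rewrite subrr oppr0.
by rewrite IH ?mulr0 ?subrr ?oppr0 //; lia.
Qed.

Lemma tele_pt w a b : w.1 a b = constb (fun a => w.1 a 0%N) a b + (Fop P w).1 a b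
   + Qop P (fun a b => w.1 a b.+1) a b.
Proof.
rewrite Fop1 /Qop /Sop /sadd /xs /mulps /dx /constb.
case: a => [|a]; case: b => [|b] /=; ring.
Qed.

Lemma expect_add u v n : expectP P (fun a b => u a b + v a b) n = expectP P u n + expectP P v n.
Proof. rewrite !expectP_Phi -big_split; apply: eq_bigr => a _; exact: Phi_sadd. Qed.

Lemma expect_zero n : expectP P (fun _ _ => 0) n = 0.
Proof. rewrite expectP_Phi big1 // => a _; exact: Phi_szero. Qed.

Lemma tele_E w n : expectP P w.1 n =
  expectP P (constb (fun a => w.1 a 0%N)) n + expectP P (Fop P w).1 n.
Proof.
have H : w.1 = fun a b => (fun a b => constb (fun a => w.1 a 0%N) a b + (Fop P w).1 a b) a b
   + Qop P (fun a b => w.1 a b.+1) a b.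
  by fext; apply: functional_extensionality => y; rewrite -tele_pt.
by rewrite {1}H expect_add expect_Q // addr0 expect_add.
Qed.

Lemma expect_ext u v n : (forall a b, u a b = v a b) -> expectP P u n = expectP P v n.
Proof.
move=> H; have -> : u = v by fext; apply: functional_extensionality => y; exact: H.
by [].
Qed.

Definition cN O N : ser := fun a => \sum_(k < N) pint_term P (O, fun _ _ => 0) k a.

Lemma claim O N n : expectP P O n =
  expectP P (constb (cN O N)) n + expectP P (iter N (Fop P) (O, fun _ _ => 0)).1 n.
Proof.
elim: N => [|N IH].
  rewrite (@expect_ext (constb (cN O 0)) (fun _ _ => 0)) ?expect_zero ?add0r //.
  by move=> a [|b]; rewrite /constb /cN ?big_ord0.
rewrite IH tele_E addrA -iterS; congr (_ + _); rewrite -expect_add.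
apply: expect_ext => a b; rewrite /constb /cN; case: b => [|b]; last by rewrite addr0.
by rewrite big_ord_recr.
Qed.

Lemma expect_const c n : expectP P (constb c) n = smul c (expectP P one_obs) n.
Proof.
rewrite expectP_Phi /smul; apply: eq_bigr => a _.
have -> : constb c a = sscale (c a) (one_obs 0%N).
  by fext; rewrite /constb /sscale /one_obs; case: x => [|b] /=; rewrite ?mulr1 ?mulr0.
rewrite Phi_sscale expectP_Phi big_ord_recl /= subn0 big1 ?addr0 // => i _.
have -> : one_obs (bump 0 i) = szero by fext; rewrite /one_obs /bump leq0n add1n.
exact: Phi_szero.
Qed.

Lemma cN_stable O a N : (3 * a < N)%N -> cN O N a = cN O (3 * a).+1 a.
Proof.
move=> h; have [t ->] : exists t, N = ((3 * a).+1 + t)%N by exists (N - (3 * a).+1)%N; lia.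
elim: t => [|t IH]; first by rewrite addn0.
rewrite addnS /cN big_ord_recr /= -/(cN O _ a) IH.
by rewrite /pint_term /proj -/(Fop P) weight ?addr0 //; lia.
Qed.

Definition cinf O : ser := fun a => cN O (3 * a).+1 a.

Lemma expect_O O : expectP P O = smul (cinf O) (expectP P one_obs).
Proof.
fext; rewrite (claim O (6 * x).+1) expect_const.
rewrite [X in _ + X]expectP_Phi big1 ?addr0; last first.
  move=> a _; apply: Phi_low => j hj; apply: weight; have := ltn_ord a; lia.
rewrite /smul; apply: eq_bigr => a _; rewrite /cinf cN_stable //; have := ltn_ord a; lia.
Qed.

Lemma E1_0 : expectP P one_obs 0%N = 1.
Proof.
rewrite expectP_Phi big_ord1 /Phi big_ord1 /PT /Gk /cm /= /mulps big_ord1 /one_obs /=.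
by rewrite !expr0 coef1 /= fact0 invr1 !mulr1.
Qed.

Lemma part2 O : ser_converges (pint_term P (O, fun _ _ => 0))
                   (sdiv (expectP P O) (expectP P one_obs)).
Proof.
move=> a; exists (3 * a).+1 => N hN.
change (cN O N a = sdiv (expectP P O) (expectP P one_obs) a).
rewrite cN_stable //.
by rewrite /sdiv expect_O smul_cancel // E1_0 oner_neq0.
Qed.
End F.

Section G.
Variable P : {poly algC}.
Hypothesis hP : forall n : nat, (n < 3)%N -> P`_n = 0.

Lemma i2 c k a b : (iint_term P c k).2 a b = 0.
Proof.
elim: k a b => [//|k IH] a b.
rewrite /iint_term iterS -/(iint_term P c k) /= big1; last by move=> j _; rewrite IH mulr0.
by case: a => [|a]; rewrite ?IH ?mulr0 subrr oppr0.
Qed.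

Lemma i1 c k a b : (iint_term P c k.+1).1 a b = 0.
Proof. by rewrite /iint_term iterS /= oppr0. Qed.

Lemma part1 c : sf_converges (iint_term P c) (incl c).
Proof.
move=> a b; split.
  exists 1%N => N hN; case: N hN => // N _.
  by rewrite big_ord_recl big1 ?addr0 // => k _; rewrite lift0 i1.
exists 0%N => N _; by rewrite big1 // => k _; rewrite i2.
Qed.

Lemma k1 f k a b : (iter k (Fop P) (fun _ _ => 0, f)).1 a b = 0.
Proof.
elim: k a b => [//|k IH] a b.
rewrite iterS Fop1 big1; last by move=> j _; rewrite IH mulr0.
by case: a => [|a]; rewrite ?IH ?mulr0 subrr oppr0.
Qed.

Lemma part3 f : sf_converges (Kint_term P (fun _ _ => 0, f)) sf_zero.
Proof.
move=> a b; split; exists 0%N => N _; rewrite big1 //= => k _.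
by rewrite /Kint_term /Kop /= -/(Fop P) k1.
Qed.

Variable O : ser.
Definition gk k : ser := fun b => (iter k (Fop P) (embed O)).1 0%N b.+1.
Definition qs : ser := fun j => (P^`())`_j.+1.
Definition s1 : ser := fun b => (Sprime P)`_b.+1.

Lemma g_rec k : gk k.+1 = fun b => - smul qs (gk k) b.
Proof.
fext; rewrite /gk iterS Fop1 subr0 big_ord_recl Pd_low // mul0r add0r; congr (- _).
Qed.

Lemma g_low k b : (b < k)%N -> gk k b = 0.
Proof.
elim: k b => [//|k IH] b hb.
rewrite g_rec /smul big1 ?oppr0 // => j _.
case: (nat_of_ord j) (ltn_ord j) => [|j'] hj; first by rewrite /qs Pd_low ?mul0r.
by rewrite IH ?mulr0 //; lia.
Qed.

Lemma s1E : s1 = fun b => sdelta b + qs b.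
Proof.
fext; rewrite /s1 /qs /Sprime !coef_deriv /Spoly coefD coefZ coefXn mulrnDl; congr (_ + _).
case: x => [|b] /=; last by rewrite mulr0 mul0rn.
by rewrite mulr1 -[X in X = _]mulr_natr mulVf // pnatr_eq0.
Qed.

Lemma s1_0 : s1 0%N != 0.
Proof. by rewrite s1E /= /qs Pd_low // addr0 oner_neq0. Qed.

Lemma smul_s1 g b : smul s1 g b = g b + smul qs g b.
Proof.
rewrite s1E /smul; under eq_bigr do rewrite mulrDl.
rewrite big_split /= big_ord_recl /= subn0 mul1r big1 ?addr0 // => j _.
by rewrite /bump leq0n add1n mul0r.
Qed.

Lemma smul_sub s f g b : smul s (fun j => f j - g j) b = smul s f b - smul s g b.
Proof. rewrite /smul -sumrB; apply: eq_bigr => j _; by rewrite mulrBr. Qed.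

Definition HN N : ser := fun b => \sum_(k < N) gk k b.

Lemma smul_HN N b : smul s1 (HN N) b = gk 0 b - gk N b.
Proof.
rewrite /smul /HN.
under eq_bigr do rewrite mulr_sumr.
rewrite exchange_big /=.
have hq : forall k, smul qs (gk k) b = - gk k.+1 b by move=> k; rewrite g_rec opprK.
under eq_bigr => k _ do rewrite -/(smul s1 (gk k) b) smul_s1 hq.
elim: N => [|N IH]; first by rewrite big_ord0 subrr.
by rewrite big_ord_recr /= IH; ring.
Qed.

Lemma part4b b N : (b < N)%N -> HN N b = Kcl_coef P O b.
Proof.
move=> hN.
set h := Kcl_coef P O.
have hh : smul s1 h = gk 0.
  rewrite /h /Kcl_coef /sdiv -/s1 smul_comm smul_assoc.
  rewrite (smul_comm (sinv s1)) smul_sinv ?s1_0 // smul_delta //.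
set d : ser := fun j => HN N j - h j.
have hd : d = smul (smul s1 d) (sinv s1).
  by rewrite [smul s1 d]smul_comm smul_cancel // s1_0.
suff : d b = 0 by rewrite /d => /eqP; rewrite subr_eq0 => /eqP.
rewrite hd {1}/smul big1 // => j _.
rewrite /d smul_sub smul_HN hh (@g_low N j) ?subr0 ?subrr ?mul0r //.
have := ltn_ord j; lia.
Qed.

Lemma part4 b : (exists N0, forall N, (N0 <= N)%N ->
        \sum_(k < N) (Kint_term P (embed O) k).1 0%N b = 0) /\
     (exists N0, forall N, (N0 <= N)%N ->
        \sum_(k < N) (Kint_term P (embed O) k).2 0%N b = Kcl_coef P O b).
Proof.
split; first by exists 0%N => N _; rewrite big1.
exists b.+1 => N hN; change (HN N b = Kcl_coef P O b); exact: part4b.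
Qed.
End G.


Theorem mainTheorem10 (P : {poly algC})
  (hP : forall n : nat, (n < 3)%N -> P`_n = 0) :
  (* i_int = inclusion of constants *)
  (forall c : ser, sf_converges (iint_term P c) (incl c)) /\
  (* p_int(O) = < e^{iP/hbar} O > / < e^{iP/hbar} > *)
  (forall O : bser,
     ser_converges (pint_term P (O, fun _ _ => 0))
                   (sdiv (expectP P O) (expectP P one_obs))) /\
  (* K_int (xi f) = 0 *)
  (forall f : bser, sf_converges (Kint_term P (fun _ _ => 0, f)) sf_zero) /\
  (* classical limit: K_int(O) mod hbar = xi (O(x) - O(0)) / S'(x) *)
  (forall (O : ser) (b : nat),
     (exists N0, forall N, (N0 <= N)%N ->
        \sum_(k < N) (Kint_term P (embed O) k).1 0%N b = 0) /\
     (exists N0, forall N, (N0 <= N)%N ->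
        \sum_(k < N) (Kint_term P (embed O) k).2 0%N b = Kcl_coef P O b)).
Proof.
split; first by move=> c; exact: (part1 P c).
split; first by move=> O; exact: (part2 P hP O).
split; first by move=> f; exact: (part3 P f).
move=> O b; exact: (part4 P hP O b).
Qed.
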